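(* For every $m\in\mathbb{N}$ and $\boldsymbol{X}\in\mathbb{N}^m$, $$\frac{\|\widehat{\boldsymbol{\mu}}_m\|_{1/2}^{1/2}}{\sqrt{2\pi m}}-\frac32\sqrt{\frac1{2\pi}}\frac{1}{m^{3/2}}N(\widehat{\boldsymbol{\mu}}_m)\le\hat{\mathfrak{R}}_m(\boldsymbol{X})\le\frac{\|\widehat{\boldsymbol{\mu}}_m\|_{1/2}^{1/2}}{\sqrt{2\pi m}}+\sqrt{\frac1{2\pi}}\frac{1}{m^{3/2}}N(\widehat{\boldsymbol{\mu}}_m),$$ where $N(\widehat{\boldsymbol{\mu}}_m):=\sum_{x\in\mathbb{N}:\,\widehat{\boldsymbol{\mu}}_m(x)>0}\widehat{\boldsymbol{\mu}}_m(x)^{-1/2}$.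
   Context: $\widehat{\boldsymbol{\mu}}_m(i)=\frac1m\sum_{t=1}^m\mathbb{I}\{X_t=i\}$. $\|\boldsymbol{\mu}\|_{1/2}=(\sum_i\sqrt{\boldsymbol{\mu}(i)})^2$. $\hat{\mathfrak{R}}_m(\boldsymbol{X})=\mathbb{E}_{\boldsymbol{\sigma}}\big[\sup_{f:\mathbb{N}\to\{0,1\}}\frac1m\sum_{t=1}^m\sigma_tf(X_t)\big]$ with $\boldsymbol{\sigma}$ uniform on $\{-1,1\}^m$. *)

(* Defs.v *)
From HB Require Import structures.
From mathcomp Require Import all_boot all_order all_algebra.
From mathcomp Require Import all_classical all_reals all_analysis.
Set Implicit Arguments. Unset Strict Implicit. Unset Printing Implicit Defensive.
Import Order.TTheory GRing.Theory Num.Theory.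
Local Open Scope ring_scope.

Section Defs.
Variable R : realType.

Definition emp_meas (m : nat) (X : 'I_m -> nat) (i : nat) : R :=
  m%:R^-1 * (\sum_(t < m) (X t == i)%:R).

Definition emp_supp (m : nat) (X : 'I_m -> nat) : seq nat :=
  undup [seq X t | t <- enum 'I_m].

(* ||mu||_{1/2} = (sum_i sqrt(mu i))^2 ; the sum over all i in N reduces to
   the finite support since the other terms are 0 *)
Definition half_norm (m : nat) (X : 'I_m -> nat) : R :=
  (\sum_(i <- emp_supp X) Num.sqrt (emp_meas X i)) ^+ 2.

Definition Nmu (m : nat) (X : 'I_m -> nat) : R :=
  \sum_(x <- emp_supp X | 0 < emp_meas X x) (emp_meas X x) `^ (- (1/2)).

Definition rsign (b : bool) : R := if b then 1 else -1.

Definition rad_sup (m : nat) (X : 'I_m -> nat) (s : {ffun 'I_m -> bool}) : R :=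
  sup [set (m%:R^-1 * \sum_(t < m) rsign (s t) * (f (X t))%:R)
      | f in [set: nat -> bool]].

Definition emp_rademacher (m : nat) (X : 'I_m -> nat) : R :=
  (2 ^+ m)^-1 * \sum_(s : {ffun 'I_m -> bool}) rad_sup X s.

End Defs.

(* Main.v *)
Require Import Defs.
From HB Require Import structures.
From mathcomp Require Import all_boot all_order all_algebra.
From mathcomp Require Import all_classical all_reals all_analysis.
From mathcomp Require Import ring lra.
Import Order.TTheory GRing.Theory Num.Theory.
Local Open Scope ring_scope.



Section Wallis.
Variable R : realType.

Fixpoint Fs (n : nat) : R -> R := match n with
| 0 => id
| 1 => - cos
| n'.+2 => (n'.+2%:R)^-1 *: (- ((sin ^+ n'.+1) * cos)) + (n'.+1%:R / n'.+2%:R) *: Fs n'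
end.

Lemma Fs_derive n (x : R) : is_derive x 1 (Fs n) (sin x ^+ n).
Proof.
suff H : forall n, is_derive x 1 (Fs n) (sin x ^+ n) /\ is_derive x 1 (Fs n.+1) (sin x ^+ n.+1) by case: (H n).
elim=> [|k [IH1 IH2]]; split.
- by apply: is_derive_eq; rewrite expr0.
- by apply: is_derive_eq; rewrite /= expr1 opprK.
- by [].
apply: is_derive_eq.
have E : forall a b : R, a *: b = a * b by [].
rewrite exprfctE !E.
have hc := cos2sin2 x.
have hk : (k.+2%:R : R) != 0 by rewrite pnatr_eq0.
set s := sin x in hc *; set c := cos x in hc *.
transitivity (k.+2%:R^-1 * -(s^+k.+1 * -s + k.+1%:R * s^+k * c^+2) + (k.+1%:R / k.+2%:R) * s^+k).
  by rewrite /=; ring.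
rewrite hc !exprS expr0 mulr1; set t := s ^+ k; set K := (k.+2%:R : R); have -> : (k.+1%:R : R) = K - 1 by rewrite /K !mulrS; ring.
field => //.
Qed.

Lemma fopp (f : R -> R) x : (- f) x = - f x. Proof. by []. Qed.
Lemma fadd (f g : R -> R) x : (f + g) x = f x + g x. Proof. by []. Qed.
Lemma fsub (f g : R -> R) x : (f - g) x = f x - g x. Proof. by []. Qed.
Lemma fmul (f g : R -> R) x : (f * g) x = f x * g x. Proof. by []. Qed.
Lemma fscal (f : R -> R) (k x : R) : (k *: f) x = k * f x. Proof. by []. Qed.

Definition Iw n := Fs n (pi / 2) - Fs n 0.

Lemma Iw0 : Iw 0 = pi / 2.
Proof. by rewrite /Iw /= subr0. Qed.

Lemma Iw1 : Iw 1 = 1.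
Proof. by rewrite /Iw /= !fopp cos_pihalf cos0 oppr0 sub0r opprK. Qed.

Lemma Iw_rec n : Iw n.+2 = (n.+1%:R / n.+2%:R) * Iw n.
Proof.
rewrite /Iw /= !fadd !fscal !fopp !fmul !exprfctE cos_pihalf sin0 expr0n /=.
by rewrite !mulr0 mul0r oppr0 !mulr0 !add0r mulrBr.
Qed.

Lemma Iw_mono n : Iw n.+1 <= Iw n.
Proof.
set G := Fs n - Fs n.+1.
have dG : forall x : R, is_derive x 1 G (sin x ^+ n - sin x ^+ n.+1).
  by move=> x; apply: is_deriveB; apply: Fs_derive.
have der : forall x : R, derivable G x 1 by move=> x; case: (dG x).
have key : G 0 <= G (pi / 2).
  apply: (@ger0_derive1_ndecr R G 0 (pi / 2)).
  - by move=> x _; exact: der.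
  - move=> x; rewrite in_itv /= => /andP[x0 xp].
    rewrite derive1E derive_val subr_ge0 exprS.
    have s0 : 0 <= sin x by apply: sin_ge0_pi; rewrite ltW //= (le_trans (ltW xp)) // ler_pdivrMr // ler_peMr // ?pi_ge0 // ler1n.
    by rewrite ler_piMl // ?exprn_ge0 // sin_le1.
  - by apply: derivable_within_continuous => x _; exact: der.
  - by [].
  - by rewrite divr_ge0 // pi_ge0.
  - by [].
move: key; rewrite /G /Iw !fsub => key.
lra.
Qed.

Definition qc k : R := 'C(k.*2, k)%:R / 4 ^+ k.

Lemma qc_gt0 k : 0 < qc k.
Proof. by rewrite /qc divr_gt0 ?exprn_gt0 // ltr0n bin_gt0 -addnn leq_addl. Qed.

Lemma qc_rec k : qc k.+1 * k.+1.*2%:R = qc k * k.*2.+1%:R.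
Proof.
have h1 := mul_bin_diag k.*2.+2 k.
have h2 := mul_bin_down k.*2.+1 k.
rewrite /= in h1 h2.
have e : (k.*2.+1 - k = k.+1)%N by rewrite -addnn -addSn addnK.
rewrite e in h2.
move/(congr1 (fun n => n%:R : R)): h1; rewrite !natrM => h1.
move/(congr1 (fun n => n%:R : R)): h2; rewrite !natrM => h2.
rewrite /qc doubleS exprS.
have k1 : (k.+1%:R : R) != 0 by rewrite pnatr_eq0.
have d2 : (k.*2.+2%:R : R) = 2 * k.+1%:R by rewrite -doubleS -muln2 natrM mulrC.
rewrite d2 in h1 *.
set a := ('C(k.*2.+2, k.+1)%:R : R) in h1 *.
set b := ('C(k.*2.+1, k)%:R : R) in h1 h2 *.
set c := ('C(k.*2, k)%:R : R) in h2 *.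
have ha : a = 2 * b.
  by apply: (mulIf k1); rewrite mulrC -h1; ring.
have k2 : (k.*2.+1%:R : R) != 0 by rewrite pnatr_eq0.
have hc : c = k.+1%:R * b / k.*2.+1%:R.
  by rewrite -h2; field.
rewrite ha hc.
field.
by rewrite addrC natr1 k2 andbT expf_neq0 // pnatr_eq0.
Qed.

Lemma Iw_q k : Iw k.*2 = pi / 2 * qc k /\ Iw k.*2.+1 * (k.*2.+1%:R * qc k) = 1.
Proof.
elim: k => [|k [IH1 IH2]].
  by rewrite /= Iw0 Iw1 /qc /= bin0 expr0 !divr1 !mulr1.
have e := qc_rec k.
rewrite doubleS in e.
have k1 : (k.*2.+2%:R : R) != 0 by rewrite pnatr_eq0.
have k3 : (k.*2.+3%:R : R) != 0 by rewrite pnatr_eq0.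
have e' : qc k.+1 = qc k * k.*2.+1%:R / k.*2.+2%:R by rewrite -e; field.
rewrite doubleS e'; split.
  by rewrite Iw_rec IH1; field.
rewrite Iw_rec; rewrite -[RHS]IH2.
have hk2 : 0 <= (k.*2%:R : R) := ler0n _ _.
field.
repeat (apply/andP; split); apply: lt0r_neq0; lra.
Qed.

Lemma wallis1 k : 2 <= pi * k.*2.+1%:R * qc k ^+ 2.
Proof.
have [h1 h2] := Iw_q k.
have m := Iw_mono k.*2.
have q0 := qc_gt0 k.
have p : 0 <= k.*2.+1%:R * qc k :> R by rewrite mulr_ge0 // ltW.
have := ler_wpM2r p m.
rewrite h2 h1 => h.
have -> : pi * k.*2.+1%:R * qc k ^+ 2 = 2 * (pi / 2 * qc k * (k.*2.+1%:R * qc k)) by field.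
lra.
Qed.

Lemma wallis2 k : pi * k%:R * qc k ^+ 2 <= 1.
Proof.
case: k => [|k]; first by rewrite mulr0 mul0r ler01.
have [h1 h2] := Iw_q k.
have [h3 _] := Iw_q k.+1.
have m := Iw_mono k.*2.+1.
have q0 := qc_gt0 k.+1.
have e := qc_rec k.
rewrite doubleS in e h3.
have p : 0 <= k.*2.+2%:R * qc k.+1 :> R by rewrite mulr_ge0 // ltW.
have h := ler_wpM2r p m.
have r : Iw k.*2.+1 * (k.*2.+2%:R * qc k.+1) = 1.
  by rewrite -[RHS]h2 (mulrC (k.*2.+2%:R)) e (mulrC (qc k)).
rewrite r h3 in h.
have d2 : (k.*2.+2%:R : R) = 2 * k.+1%:R by rewrite -doubleS -muln2 natrM mulrC.
rewrite d2 in h.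
have -> : pi * k.+1%:R * qc k.+1 ^+ 2 = pi / 2 * qc k.+1 * (2 * k.+1%:R * qc k.+1) by field.
exact: h.
Qed.

End Wallis.



Section Binom.
Variable R : realType.

Definition Bd (n : nat) (g : R -> R) : R :=
  (2 ^+ n)^-1 * \sum_(k < n.+1) 'C(n, k)%:R * g ((k : nat).*2%:R - n%:R).

Lemma natS (j : nat) : (j.+1%:R : R) = j%:R + 1.
Proof. by rewrite natr1. Qed.

Lemma Bd_step n g : Bd n.+1 g = Bd n (fun x => (g (x + 1) + g (x - 1)) / 2).
Proof.
rewrite /Bd.
set f := fun k : nat => g (k.*2%:R - n.+1%:R).
have -> : \sum_(k < n.+2) 'C(n.+1, k)%:R * g ((k : nat).*2%:R - n.+1%:R)
   = \sum_(k < n.+2) 'C(n.+1, k)%:R * f k by [].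
rewrite big_ord_recl /=.
under eq_bigr do rewrite binS natrD mulrDl.
rewrite big_split /= addrA.
have -> : 'C(n.+1, 0)%:R * f 0%N + \sum_(i < n.+1) 'C(n, (bump 0 i))%:R * f (bump 0 i)
   = \sum_(k < n.+2) 'C(n, k)%:R * f k :> R.
  by rewrite [in RHS]big_ord_recl /= !bin0.
rewrite big_ord_recr /= bin_small // mul0r addr0.
rewrite exprSr invfM -mulrA; congr (_ * _).
rewrite addrC -big_split mulrC mulr_suml; apply: eq_bigr => i _.
have E : forall a b : R, Algebra.Algebra_add__canonical__Monoid_ComLaw R a b = a + b by [].
rewrite E -mulrDr -mulrA; congr (_ * _).
rewrite /f /bump /= add1n.
congr ((g _ + g _) / 2); rewrite ?doubleS !natS; ring.
Qed.


Variable m : nat.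
Definition SA (A : {set 'I_m}) (s : {ffun 'I_m -> bool}) : R :=
  \sum_(t in A) rsign R (s t).
Definition flip (t0 : 'I_m) (s : {ffun 'I_m -> bool}) : {ffun 'I_m -> bool} :=
  [ffun t => if t == t0 then ~~ s t else s t].

Lemma flipK t0 : involutive (flip t0).
Proof.
move=> s; apply/ffunP => t; rewrite !ffunE.
by case: eqP => // ->; rewrite negbK.
Qed.

Lemma card_sig : #|{ffun 'I_m -> bool}| = (2 ^ m)%N.
Proof. by rewrite card_ffun card_bool card_ord. Qed.

Lemma dist (A : {set 'I_m}) g :
  (2 ^+ m)^-1 * \sum_(s : {ffun 'I_m -> bool}) g (SA A s) = Bd #|A| g.
Proof.
move Hn : #|A| => n; elim: n A g Hn => [|n IH] A g Hn.
  have -> : A = finset.set0 by apply: cards0_eq.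
  have -> : \sum_(s : {ffun 'I_m -> bool}) g (SA finset.set0 s) = g 0 *+ (2 ^ m)%N.
    rewrite -card_sig -sumr_const; apply: eq_bigr => s _.
    by rewrite /SA big_set0.
  rewrite /Bd big_ord1 /= bin0 expr0 invr1 !mul1r subrr.
  rewrite -[g 0 *+ _]mulr_natl natrX mulrA mulVf ?mul1r // expf_neq0 // pnatr_eq0.
have [t0 t0A] : exists t0, t0 \in A.
  by apply/set0Pn; rewrite -card_gt0 Hn.
set A' := A :\ t0.
have HA' : #|A'| = n.
  by move: Hn; rewrite (cardsD1 t0 A) t0A add1n => -[].
have SAe s : SA A s = rsign R (s t0) + SA A' s by rewrite /SA (big_setD1 _ t0A).
have SAf s : SA A' (flip t0 s) = SA A' s.
  apply: eq_bigr => t; rewrite in_setD1 => /andP[tn _].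
  by rewrite ffunE (negbTE tn).
set g' := fun x => (g (x + 1) + g (x - 1)) / 2.
have key : \sum_(s : {ffun 'I_m -> bool}) g (SA A s)
         = \sum_(s : {ffun 'I_m -> bool}) g' (SA A' s).
  set h := fun s => g (SA A s).
  have hf : \sum_(s : {ffun 'I_m -> bool}) h s = \sum_(s : {ffun 'I_m -> bool}) h (flip t0 s).
    exact: (reindex_inj (can_inj (flipK t0))).
  have : 2 * \sum_(s : {ffun 'I_m -> bool}) h s
       = \sum_(s : {ffun 'I_m -> bool}) (h s + h (flip t0 s)).
    by rewrite big_split /= -hf mulr2n mulrDl mul1r.
  have -> : \sum_(s : {ffun 'I_m -> bool}) (h s + h (flip t0 s))
          = \sum_(s : {ffun 'I_m -> bool}) 2 * g' (SA A' s).
    apply: eq_bigr => s _; rewrite /h /g' !SAe SAf ffunE eqxx.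
    rewrite mulrC divfK ?pnatr_eq0 //.
    by case: (s t0); rewrite /rsign /= (addrC 1) (addrC (-1)) //; exact: addrC.
  rewrite -mulr_sumr => /(mulfI _) -> //; by rewrite pnatr_eq0.
rewrite key IH // Bd_step.
by [].
Qed.

End Binom.



Arguments Bd {R}.
Section EE.
Variable R : realType.

Definition pos (x : R) : R := Num.max 0 x.
Definition Ep n := Bd n pos.
Definition Zp n := Bd n (fun x : R => if x == 0 then 1 else 0).

Lemma pos_id y : 0 <= y -> pos y = y.
Proof. by move=> h; rewrite /pos maxEle h. Qed.
Lemma pos_0 y : y <= 0 -> pos y = 0.
Proof. move=> h; rewrite /pos maxEle; case: ifP => // h2; apply/eqP; rewrite eq_le h2 h. by []. Qed.

Lemma Bd_ext n (f g : R -> R) :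
  (forall k : nat, (k <= n)%N -> f (k.*2%:R - n%:R) = g (k.*2%:R - n%:R)) -> Bd n f = Bd n g.
Proof.
move=> H; rewrite /Bd; congr (_ * _); apply: eq_bigr => k _.
by rewrite H // -ltnS ltn_ord.
Qed.

Lemma Bd_lin n (f h : R -> R) : Bd n (fun x => f x + h x / 2) = Bd n f + Bd n h / 2.
Proof.
rewrite /Bd -mulrA -mulrDr; congr (_ * _).
rewrite mulr_suml -big_split /=; apply: eq_bigr => k _.
rewrite mulrDr mulrA; by [].
Qed.

Lemma point_cases (a b : nat) :
  let x := a%:R - b%:R : R in x = 0 \/ 1 <= x \/ x <= -1.
Proof.
move=> x; case: (ltngtP a b) => h.
- have h' : (a.+1%:R : R) <= b%:R by rewrite ler_nat.
  rewrite natS in h'; right; right; rewrite /x; lra.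
- have h' : (b.+1%:R : R) <= a%:R by rewrite ler_nat.
  rewrite natS in h'; right; left; rewrite /x; lra.
- by left; rewrite /x h subrr.
Qed.

Lemma Ep_rec n : Ep n.+1 = Ep n + Zp n / 2.
Proof.
rewrite /Ep /Zp Bd_step -Bd_lin; apply: Bd_ext => k _.
case: (point_cases k.*2 n) => [->|[h|h]].
- rewrite eqxx add0r sub0r pos_id ?ler01 // pos_0; last by rewrite oppr_le0 ler01.
  by rewrite pos_id // addr0 add0r.
- set x := (k.*2%:R - n%:R : R) in h *.
  have hx : x != 0 by apply/eqP => e; rewrite e in h; lra.
  rewrite (negbTE hx) mul0r addr0 (@pos_id (x + 1)); last lra.
  rewrite (@pos_id (x - 1)); last lra.
  rewrite (@pos_id x); last lra.
  lra.
- set x := (k.*2%:R - n%:R : R) in h *.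
  have hx : x != 0 by apply/eqP => e; rewrite e in h; lra.
  rewrite (negbTE hx) mul0r addr0 (@pos_0 (x + 1)); last lra.
  rewrite (@pos_0 (x - 1)); last lra.
  rewrite (@pos_0 x); last lra.
  lra.
Qed.

Lemma Zp_odd k : Zp k.*2.+1 = 0.
Proof.
rewrite /Zp /Bd big1 ?mulr0 // => j _.
rewrite ifF ?mulr0 //.
apply/negbTE; rewrite subr_eq0 eqr_nat; apply/negP => /eqP /(congr1 odd).
by rewrite /= !odd_double.
Qed.

Lemma Zp_even k : Zp k.*2 = qc R k.
Proof.
rewrite /Zp /Bd (bigD1 (inord k)) //= big1 ?addr0; last first.
  move=> j jk; rewrite ifF ?mulr0 //; apply/negbTE.
  rewrite subr_eq0 eqr_nat; apply: contra jk => /eqP e.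
  apply/eqP/val_inj; rewrite /= inordK; last by rewrite ltnS -addnn leq_addl.
  exact: double_inj e.
rewrite inordK; last by rewrite ltnS -addnn leq_addl.
rewrite subrr eqxx mulr1 /qc mulrC; congr (_ * _).
by rewrite -mul2n exprM expr2 -natrM.
Qed.

Lemma Ep_val k : Ep k.*2 = k%:R * qc R k /\ Ep k.*2.+1 = k.+1%:R * qc R k.+1.
Proof.
elim: k => [|k [IH1 IH2]].
  have E0 : Ep 0 = 0 by rewrite /Ep /Bd big_ord1 /= subr0 pos_id ?mulr0 // ler0n.
  rewrite /= E0 mul0r; split => //.
  rewrite Ep_rec E0 Zp_even add0r.
  have := qc_rec R 0; rewrite /= => e.
  rewrite mul1r; apply: (mulIf (_ : (2 : R) != 0)); first by rewrite pnatr_eq0.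
  by rewrite mulrC e mulr1 mulrC divfK // pnatr_eq0.
have e := qc_rec R k.
rewrite doubleS; split.
  by rewrite Ep_rec IH2 Zp_odd mul0r addr0.
rewrite Ep_rec (Ep_rec k.*2.+1) IH2 Zp_odd mul0r addr0 -doubleS Zp_even.
have e2 := qc_rec R k.+1.
have c1 : ((k.+2).*2%:R : R) = 2 * k%:R + 4.
  by rewrite !doubleS !natS -muln2 natrM; ring.
have c2 : ((k.+1).*2.+1%:R : R) = 2 * k%:R + 3.
  by rewrite !doubleS !natS -muln2 natrM; ring.
rewrite c1 c2 in e2.
rewrite (natS R k.+1) (natS R k).
have k0 : (0 : R) <= k%:R := ler0n _ _.
lra.
Qed.

End EE.



Section FF.
Variable R : realType.

Lemma sq_le (v u : R) : 0 <= u -> v ^+ 2 <= u ^+ 2 -> v <= u.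
Proof. move=> h1 h2; nra. Qed.

Lemma Ep_u n : (0 < n)%N ->
  let u := Ep R n * Num.sqrt (2 * pi) * Num.sqrt n%:R in
  n%:R - 3 / 2 <= u /\ u <= n%:R + 1.
Proof.
move=> n0 u.
have pi0 : (0 : R) < pi := pi_gt0 R.
have q0 k := qc_gt0 R k.
have u0 : 0 <= u.
  rewrite /u mulr_ge0 ?sqrtr_ge0 // mulr_ge0 ?sqrtr_ge0 //.
  rewrite /Ep /Bd mulr_ge0 ?invr_ge0 ?exprn_ge0 // sumr_ge0 // => j _.
  by rewrite mulr_ge0 ?ler0n // /pos le_max lexx.
have u2 : u ^+ 2 = Ep R n ^+ 2 * (2 * pi) * n%:R.
  have p2 : (0:R) <= 2 * pi by lra.
  by rewrite /u !exprMn !sqr_sqrtr // ler0n.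
have [k [hn | hn]] : exists k, n = k.*2 \/ n = k.*2.+1.
  have h := odd_double_half n; exists n./2.
  by move: h; case: (odd n) => /= h; [right | left]; rewrite -[X in X = _]h ?add1n ?add0n.
- subst n; have [E1 _] := Ep_val R k.
  rewrite E1 in u2.
  have k1 : (1 : R) <= k%:R.
    by rewrite ler1n; move: n0; rewrite double_gt0.
  have w1 := wallis1 R k.
  have w2 := wallis2 R k.
  have d : (k.*2%:R : R) = 2 * k%:R by rewrite -muln2 natrM mulrC.
  rewrite natS in w1.
  rewrite d in u2 w1 *.
  set K := (k%:R : R) in k1 u2 w1 w2 *.
  set q := qc R k in u2 w1 w2 *.
  set P := pi * q ^+ 2.
  have w1' : 2 <= P * (2 * K + 1).
    by have -> : P * (2 * K + 1) = pi * (2 * K + 1) * q ^+ 2 by rewrite /P; ring.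
  have K3 : 0 <= K ^+ 3 by rewrite exprn_ge0 //; lra.
  split.
    apply: sq_le => //.
    have e2 : u ^+ 2 = 4 * K ^+ 3 * P by rewrite u2 /P; ring.
    have h1 : (2 * K - 3 / 2) ^+ 2 * (2 * K + 1) <= 8 * K ^+ 3 by nra.
    have h2 : 8 * K ^+ 3 <= 4 * K ^+ 3 * (P * (2 * K + 1)).
      have K4 : 0 <= 4 * K ^+ 3 by lra.
      have h := ler_wpM2l K4 w1'.
      lra.
    have h3 : (2 * K - 3 / 2) ^+ 2 * (2 * K + 1) <= (4 * K ^+ 3 * P) * (2 * K + 1).
      by rewrite -mulrA; lra.
    rewrite e2; move: h3; rewrite ler_pM2r //; lra.
  apply: sq_le; first lra.
  have e1 : u ^+ 2 = 4 * K ^+ 2 * (pi * K * q ^+ 2) by rewrite u2; ring.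
  have K2 : 0 <= K ^+ 2 by rewrite exprn_ge0 //; lra.
  rewrite e1.
  have K4 : 0 <= 4 * K ^+ 2 by lra.
  have h := ler_wpM2l K4 w2.
  nra.
- subst n; have [_ E2] := Ep_val R k.
  rewrite E2 in u2.
  have w1 := wallis1 R k.+1.
  have w2 := wallis2 R k.+1.
  have c1 : ((k.+1).*2.+1%:R : R) = 2 * k%:R + 3.
    by rewrite !doubleS !natS -muln2 natrM; ring.
  have c2 : (k.*2.+1%:R : R) = 2 * k%:R + 1.
    by rewrite natS -muln2 natrM; ring.
  rewrite c1 in w1.
  rewrite (natS R k) in w2 u2.
  rewrite c2 in u2 *.
  set K := (k%:R : R) in w1 w2 u2 *.
  set q := qc R k.+1 in w1 w2 u2 *.
  have K0 : 0 <= K by rewrite /K ler0n.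
  have hp : 0 <= pi * q ^+ 2 by rewrite mulr_ge0 ?exprn_ge0 // ltW // /q.
  split.
    apply: sq_le => //.
    have e2 : u ^+ 2 = 2 * (K + 1) ^+ 2 * (2 * K + 1) * (pi * q ^+ 2) by rewrite u2; ring.
    have h1 : (2 * K + 1 - 3 / 2) ^+ 2 * (2 * K + 3) <= 4 * (K + 1) ^+ 2 * (2 * K + 1) by nra.
    have M : 0 <= 2 * (K + 1) ^+ 2 * (2 * K + 1) by rewrite mulr_ge0 ?exprn_ge0 //; lra.
    have h2 := ler_wpM2l M w1.
    have h3 : (2 * K + 1 - 3 / 2) ^+ 2 * (2 * K + 3)
              <= (2 * (K + 1) ^+ 2 * (2 * K + 1) * (pi * q ^+ 2)) * (2 * K + 3) by lra.
    rewrite e2; move: h3; rewrite ler_pM2r //; lra.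
  apply: sq_le; first lra.
  have e1 : u ^+ 2 = 2 * (K + 1) ^+ 2 * ((2 * K + 1) * (pi * q ^+ 2)) by rewrite u2; ring.
  have h : (2 * K + 1) * (pi * q ^+ 2) <= 2 by lra.
  have M : 0 <= 2 * (K + 1) ^+ 2 by rewrite mulr_ge0 ?exprn_ge0 //; lra.
  have h2 := ler_wpM2l M h.
  rewrite e1; lra.
Qed.

End FF.



Section GG.
Variable R : realType.

Lemma term (m n : nat) (m0 : (0 < m)%N) (n0 : (0 < n)%N) :
  let mu : R := n%:R / m%:R in
  Num.sqrt mu / Num.sqrt (2 * pi * m%:R)
    - 3 / 2 * Num.sqrt (1 / (2 * pi)) * (1 / (m%:R `^ (3 / 2))) * mu `^ (- (1 / 2))
  <= m%:R^-1 * Ep R n /\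
  m%:R^-1 * Ep R n
  <= Num.sqrt mu / Num.sqrt (2 * pi * m%:R)
    + Num.sqrt (1 / (2 * pi)) * (1 / (m%:R `^ (3 / 2))) * mu `^ (- (1 / 2)).
Proof.
move=> mu.
have pi0 : (0 : R) < pi := pi_gt0 R.
have p2 : (0 : R) <= 2 * pi by lra.
have hn : (0 : R) < n%:R by rewrite ltr0n.
have hm : (0 : R) < m%:R by rewrite ltr0n.
have := Ep_u R n n0; rewrite /= => -[h1 h2].
set E := Ep R n in h1 h2 *.
set a := Num.sqrt (n%:R : R) in h1 h2.
set c := Num.sqrt (2 * pi : R) in h1 h2.
set b := Num.sqrt (m%:R : R).
have a0 : 0 < a by rewrite sqrtr_gt0.
have b0 : 0 < b by rewrite sqrtr_gt0.
have c0 : 0 < c by rewrite sqrtr_gt0; lra.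
have ha2 : a ^+ 2 = n%:R by rewrite sqr_sqrtr // ltW.
have hb2 : b ^+ 2 = m%:R by rewrite sqr_sqrtr // ltW.
have smu : Num.sqrt mu = a / b by rewrite /mu sqrtrM ?sqrtrV // ltW.
have sD : Num.sqrt (2 * pi * m%:R) = c * b by rewrite sqrtrM.
have sI : Num.sqrt (1 / (2 * pi)) = c^-1 by rewrite div1r sqrtrV.
have p32 : m%:R `^ (3 / 2) = m%:R * b.
  have -> : (3 / 2 : R) = 1 + 2^-1 by field; rewrite ?a1 ?b1 ?c1.
  rewrite powRD; last by apply/implyP => /eqP h; lra.
  by rewrite powRr1 ?powR12_sqrt // ltW.
have pmu : mu `^ (- (1 / 2)) = b / a.
  rewrite powRN div1r powR12_sqrt; last by rewrite /mu divr_ge0 // ltW.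
  by rewrite smu invf_div.
rewrite smu sD sI p32 pmu -hb2.
rewrite -ha2 in h1 h2.
have a1 : a != 0 by rewrite gt_eqF.
have b1 : b != 0 by rewrite gt_eqF.
have c1 : c != 0 by rewrite gt_eqF.
have D : 0 <= (c * a * b ^+ 2)^-1.
  by rewrite invr_ge0; apply/ltW; rewrite !mulr_gt0 // exprn_gt0.
split.
  rewrite -subr_le0.
  have -> : a / b / (c * b) - 3 / 2 * c^-1 * (1 / (b ^+ 2 * b)) * (b / a) - (b ^+ 2)^-1 * E
      = ((a ^+ 2 - 3 / 2) - E * c * a) * (c * a * b ^+ 2)^-1 by field; rewrite ?a1 ?b1 ?c1.
  by apply: mulr_le0_ge0 => //; lra.
rewrite -subr_ge0.
have -> : a / b / (c * b) + c^-1 * (1 / (b ^+ 2 * b)) * (b / a) - (b ^+ 2)^-1 * E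
    = ((a ^+ 2 + 1) - E * c * a) * (c * a * b ^+ 2)^-1 by field; rewrite ?a1 ?b1 ?c1.
by apply: mulr_ge0 => //; lra.
Qed.


Variable m : nat.
Variable X : 'I_m -> nat.

Definition Aset (i : nat) : {set 'I_m} := [set t | X t == i].

Lemma memX t : X t \in emp_supp X.
Proof. by rewrite mem_undup; apply: map_f; rewrite mem_enum. Qed.

Lemma part (F : 'I_m -> R) :
  \sum_(t < m) F t = \sum_(i <- emp_supp X) \sum_(t in Aset i) F t.
Proof.
transitivity (\sum_(t < m) \sum_(i <- emp_supp X) (if X t == i then F t else 0)).
  apply: eq_bigr => t _.
  rewrite (bigD1_seq (X t)) /= ?undup_uniq ?memX // eqxx big1 ?addr0 // => i.
  by rewrite eq_sym => /negbTE ->.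
rewrite exchange_big /=; apply: eq_bigr => i _.
by rewrite [RHS]big_mkcond /=; apply: eq_bigr => t _; rewrite inE.
Qed.

Lemma radE s : rad_sup R X s = m%:R^-1 * \sum_(i <- emp_supp X) pos R (SA R m (Aset i) s).
Proof.
set V := fun f : nat -> bool => m%:R^-1 * \sum_(t < m) rsign R (s t) * (f (X t))%:R.
have Vf f : V f = m%:R^-1 * \sum_(i <- emp_supp X) (f i)%:R * SA R m (Aset i) s.
  rewrite /V part; congr (_ * _); apply: eq_bigr => i _.
  rewrite /SA mulr_sumr; apply: eq_bigr => t; rewrite inE => /eqP ->.
  by rewrite mulrC.
set M := m%:R^-1 * _.
have mi : (0 : R) <= m%:R^-1 by rewrite invr_ge0 ler0n.
have ub f : V f <= M.
  rewrite Vf /M; apply: ler_wpM2l => //; apply: ler_sum => i _.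
  case: (f i) => /=; first by rewrite mul1r /pos le_max lexx orbT.
  by rewrite mul0r /pos le_max lexx.
set fs := fun i => (0 < SA R m (Aset i) s).
have att : V fs = M.
  rewrite Vf /M; congr (_ * _); apply: eq_bigr => i _.
  rewrite /fs; case: ltP => h /=.
    by rewrite mul1r pos_id // ltW.
  by rewrite mul0r pos_0.
rewrite /rad_sup.
apply/eqP; rewrite eq_le; apply/andP; split.
  apply: ge_sup; first by exists (V fs), fs.
  by move=> y [f _ <-]; exact: ub f.
rewrite -att; apply: ub_le_sup; last by exists fs.
by exists M => y [f _ <-]; exact: ub f.
Qed.

Lemma RadE : emp_rademacher R X = m%:R^-1 * \sum_(i <- emp_supp X) Ep R #|Aset i|.
Proof.
rewrite /emp_rademacher.
under eq_bigr do rewrite radE.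
rewrite -mulr_sumr mulrCA; congr (_ * _).
rewrite exchange_big /= mulr_sumr; apply: eq_bigr => i _.
by rewrite dist.
Qed.

Lemma EmeasE i : emp_meas R X i = #|Aset i|%:R / m%:R.
Proof.
rewrite /emp_meas mulrC; congr (_ * _).
rewrite (eq_bigr (fun t => if t \in Aset i then 1 else 0)); last first.
  by move=> t _; rewrite inE; case: eqP.
by rewrite -big_mkcond sumr_const.
Qed.

Lemma npos i : i \in emp_supp X -> (0 < #|Aset i|)%N.
Proof.
rewrite mem_undup => /mapP [t _ ->].
by apply/card_gt0P; exists t; rewrite inE.
Qed.

End GG.

Theorem corollary1 (R : realType) (m : nat) (hm : (0 < m)%N) (X : 'I_m -> nat) :
  Num.sqrt (half_norm R X) / Num.sqrt (2 * pi * m%:R)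
    - 3 / 2 * Num.sqrt (1 / (2 * pi)) * (1 / (m%:R `^ (3 / 2))) * Nmu R X
  <= emp_rademacher R X
  /\
  emp_rademacher R X
  <= Num.sqrt (half_norm R X) / Num.sqrt (2 * pi * m%:R)
    + Num.sqrt (1 / (2 * pi)) * (1 / (m%:R `^ (3 / 2))) * Nmu R X.
Proof.
have HN : Num.sqrt (half_norm R X) = \sum_(i <- emp_supp X) Num.sqrt (emp_meas R X i).
  rewrite /half_norm sqrtr_sqr ger0_norm // sumr_ge0 // => i _; exact: sqrtr_ge0.
have Nm : Nmu R X = \sum_(i <- emp_supp X) (emp_meas R X i) `^ (- (1 / 2)).
  rewrite /Nmu big_seq_cond [RHS]big_seq_cond; apply: eq_bigl => i.
  case: (boolP (i \in emp_supp X)) => H /=; last by [].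
  by rewrite EmeasE divr_gt0 ?ltr0n ?npos.
rewrite HN Nm RadE.
split.
- rewrite [in X in X <= _]mulr_suml [in X in X <= _]mulr_sumr -sumrB [in X in _ <= X]mulr_sumr.
  rewrite big_seq [in X in _ <= X]big_seq; apply: ler_sum => i H.
  rewrite EmeasE; exact: (@term R m _ hm (@npos m X i H)).1.
- rewrite [in X in _ <= X]mulr_suml [in X in _ <= X]mulr_sumr -big_split /= [in X in X <= _]mulr_sumr.
  rewrite big_seq [in X in _ <= X]big_seq; apply: ler_sum => i H.
  rewrite EmeasE; exact: (@term R m _ hm (@npos m X i H)).2.
Qed.
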